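(* Let $S$ be a stacked $2$-sphere and let $\alpha=abc$ and $\beta=abd$ be two triangles of $S$, with $\overline{\alpha}$ (resp. $\overline{\beta}$) the unique tetrahedron of $\overline{S}$ containing $\alpha$ (resp. $\beta$). (a) If $\overline{\alpha}$ and $\overline{\beta}$ are adjacent nodes of the dual graph $\Lambda(\overline{S})$, then $cd$ is not an edge of $S$ and the triangulated $2$-sphere $T$ obtained from $S$ by the edge flip $ab\mapsto cd$ is stacked. (b) Conversely, if $cd$ is not an edge of $S$ and the $2$-sphere $T$ obtained by the edge flip $ab\mapsto cd$ is stacked, then $\overline{\alpha}$ and $\overline{\beta}$ are adjacent in $\Lambda(\overline{S})$.
   Context: A triangulated $2$-sphere is a finite simplicial complex whose geometric realization is homeomorphic to the $2$-sphere. Edge flip $ab\mapsto cd$: if $abc,abd$ are triangles and $cd$ is not an edge, replace $abc,abd$ by $acd,bcd$. A stacked $3$-ball is a simplicial complex obtained from a single tetrahedron (with its faces) by repeatedly gluing a new tetrahedron along exactly one triangle of the boundary, introducing one new vertex each time. A stacked $2$-sphere is a triangulated $2$-sphere isomorphic to the boundary of a stacked $3$-ball. For a stacked $2$-sphere $S$, $\overline{S}$ denotes the simplicial complex whose faces are all cliques of the edge graph of $S$; it is known that $\overline{S}$ is a stacked $3$-ball with boundary $S$, and that it is, up to isomorphism, the unique stacked $3$-ball with boundary $S$. Each triangle $\alpha$ of $S$ lies in a unique tetrahedron $\overline{\alpha}$ of $\overline{S}$. The dual graph $\Lambda(C)$ of a complex $C$ made of tetrahedra has the tetrahedra as nodes,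 two nodes being adjacent iff the tetrahedra share a triangle; for a stacked $3$-ball it is a tree with node degrees at most $4$. *)

(* Defs.v *)
(* Simplicial complexes are represented by their facets:
   a pure 2-dimensional complex by its set of triangles ({set {set V}}),
   a pure 3-dimensional complex by its set of tetrahedra. *)
From mathcomp Require Import all_boot.
Set Implicit Arguments. Unset Strict Implicit. Unset Printing Implicit Defensive.

Inductive stacked_ball {W : finType} : {set {set W}} -> Prop :=
  | sb_base (t : {set W}) : #|t| = 4 -> stacked_ball [set t]
  | sb_glue (B : {set {set W}}) (sigma : {set W}) (v : W) :
      stacked_ball B ->
      #|sigma| = 3 ->
      (exists2 t, t \in B & sigma \subset t) ->
      #|[set t in B | sigma \subset t]| = 1 ->
      (forall t, t \in B -> v \notin t) ->
      stacked_ball ((v |: sigma) |: B).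

Definition boundary {W : finType} (B : {set {set W}}) : {set {set W}} :=
  [set s : {set W} | (#|s| == 3) && (#|[set t in B | s \subset t]| == 1)].

Definition stacked_sphere {V : finType} (S : {set {set V}}) : Prop :=
  exists (W : finType) (B : {set {set W}}) (f : W -> V),
    [/\ injective f, stacked_ball B & S = [set f @: (s : {set W}) | s : {set W} in boundary B]].

Definition is_edge {V : finType} (S : {set {set V}}) (x y : V) : bool :=
  (x != y) && [exists s in S, (x \in s) && (y \in s)].

Definition Sbar {V : finType} (S : {set {set V}}) : {set {set V}} :=
  [set t : {set V} | (#|t| == 4) &&
     [forall x in t, forall y in t, (x != y) ==> is_edge S x y]].

Definition dual_adj {V : finType} (t1 t2 : {set V}) : bool :=
  (t1 != t2) && (#|t1 :&: t2| == 3).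

Definition edge_flip {V : finType} (S : {set {set V}}) (a b c d : V)
  : {set {set V}} :=
  [set [set a; c; d]; [set b; c; d]] :|: (S :\ [set a; b; c] :\ [set a; b; d]).

(* Main.v *)
Require Import Defs.
From mathcomp Require Import all_boot zify.
Set Implicit Arguments. Unset Strict Implicit. Unset Printing Implicit Defensive.

Section Basics.
Variable W : finType.
Implicit Types (B : {set {set W}}) (s t X : {set W}).

Definition cnt B s := #|[set t in B | s \subset t]|.
Definition cov B (x y : W) := [exists t in B, (x \in t) && (y \in t)].

Lemma cntU1 X B s : cnt (X |: B) s = cnt B s + ((s \subset X) && (X \notin B)).
Proof.
rewrite /cnt.
have -> : [set t in X |: B | s \subset t] =
  (if s \subset X then X |: [set t in B | s \subset t] else [set t in B | s \subset t]).
  apply/setP=> t; rewrite !inE; case: ifP => sX; rewrite ?inE;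
  by case: eqP => [->|]; rewrite ?sX ?orbF ?andbF.
case: ifP => sX; last by rewrite addn0.
by rewrite cardsU1 inE sX andbT addnC.
Qed.

Lemma cntD1 X B s : cnt (B :\ X) s = cnt B s - ((s \subset X) && (X \in B)).
Proof.
rewrite /cnt.
have -> : [set t in B :\ X | s \subset t] = [set t in B | s \subset t] :\ X.
  by apply/setP=> t; rewrite !inE andbA.
rewrite (cardsD1 X [set t in B | s \subset t]) inE andbC.
by case: (_ && _) => /=; rewrite ?subn0 // add1n subSS subn0.
Qed.

Lemma cnt_ge2 B s t1 t2 : t1 \in B -> t2 \in B -> t1 != t2 ->
  s \subset t1 -> s \subset t2 -> 2 <= cnt B s.
Proof.
move=> H1 H2 ne s1 s2; apply/card_gt1P; exists t1, t2; by rewrite !inE H1 H2 s1 s2.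
Qed.

Lemma cnt1_uniq B s t1 t2 : cnt B s = 1 -> t1 \in B -> t2 \in B ->
  s \subset t1 -> s \subset t2 -> t1 = t2.
Proof.
move=> c H1 H2 s1 s2; apply/eqP; apply/negPn/negP=> ne.
by have := cnt_ge2 H1 H2 ne s1 s2; rewrite c.
Qed.

Lemma cnt_gt0 B s : (0 < cnt B s) = [exists t in B, s \subset t].
Proof.
rewrite /cnt card_gt0; apply/set0Pn/existsP=> [[t]|[t]]; rewrite ?inE => H; by exists t; rewrite ?inE.
Qed.

Lemma cntE0 B s : (forall t, t \in B -> ~~ (s \subset t)) -> cnt B s = 0.
Proof.
move=> H; apply/eqP; rewrite cards_eq0; apply/eqP/setP=> t; rewrite !inE.
by apply/negbTE; apply/negP=> /andP[tB st]; move: (H t tB); rewrite st.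
Qed.

Lemma covU1 X B x y : cov (X |: B) x y = cov B x y || ((x \in X) && (y \in X)).
Proof.
apply/existsP/orP=> [[t]|[/existsP[t]|H]].
- rewrite !inE => /andP[/orP[/eqP->|tB] H]; [right|left] => //; by apply/existsP; exists t; rewrite tB.
- by move=> /andP[tB H]; exists t; rewrite !inE tB orbT.
- by exists X; rewrite !inE eqxx.
Qed.

Lemma cardsIU1r s X z : #|s :&: (X :|: [set z])| = #|s :&: X| + ((z \in s) && (z \notin X)).
Proof.
rewrite setUC -/(z |: X).
case zs: (z \in s) => /=; last first.
  rewrite addn0; have -> // : s :&: (z |: X) = s :&: X.
  by apply/setP=> y; rewrite !inE; case: eqP => // ->; rewrite zs.
have -> : s :&: (z |: X) = z |: (s :&: X).
  by apply/setP=> y; rewrite !inE; case: eqP => // ->; rewrite zs.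
by rewrite cardsU1 inE zs /= addnC.
Qed.

Lemma cardsI1 s z : #|s :&: [set z]| = (z \in s).
Proof.
case zs: (z \in s).
  have -> : s :&: [set z] = [set z].
    by apply/setP=> y; rewrite !inE; case: (y =P z) => [->|]; rewrite ?zs ?andbF.
  by rewrite cards1.
have -> : s :&: [set z] = set0.
  by apply/setP=> y; rewrite !inE; case: (y =P z) => [->|]; rewrite ?zs ?andbF.
by rewrite cards0.
Qed.

Lemma subsetE_card s X : (s \subset X) = (#|s :&: X| == #|s|).
Proof.
rewrite -subsetIidl; apply/idP/eqP=> [H|H].
  by apply/eqP; rewrite eqn_leq subset_leq_card ?subsetIl // subset_leq_card.
have: s :&: X == s by rewrite eqEcard subsetIl H leqnn.
by move/eqP->.
Qed.

End Basics.

Section Ball.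
Variable W : finType.
Implicit Types (B : {set {set W}}) (s t X : {set W}).

Lemma glue_vs B (sigma : {set W}) v t0 : t0 \in B -> sigma \subset t0 ->
  (forall t, t \in B -> v \notin t) -> v \notin sigma.
Proof. by move=> t0B st0 Hv; apply/negP=> /(subsetP st0); apply/negP; apply: Hv. Qed.

Lemma glue_NB B (sigma : {set W}) v :
  (forall t, t \in B -> v \notin t) -> (v |: sigma) \notin B.
Proof. by move=> Hv; apply/negP=> /Hv; rewrite setU11. Qed.

Lemma glue_cnt B (sigma : {set W}) v s :
  (forall t, t \in B -> v \notin t) ->
  cnt ((v |: sigma) |: B) s = cnt B s + (s \subset v |: sigma).
Proof. by move=> Hv; rewrite cntU1 glue_NB // andbT. Qed.

Lemma SB_card B : stacked_ball B -> forall t, t \in B -> #|t| = 4.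
Proof.
elim=> {B} [t Ht | B sg v HB IH Hs [t0 t0B st0] cs Hv] t'.
  by rewrite inE => /eqP->.
rewrite in_setU1 => /orP[/eqP->|]; last exact: IH.
by rewrite cardsU1 (glue_vs t0B st0 Hv) Hs.
Qed.

Lemma sub_eq_card s t : s \subset t -> #|t| <= #|s| -> s = t.
Proof. by move=> st c; apply/eqP; rewrite eqEcard st c. Qed.

Lemma SB_cnt2 B : stacked_ball B -> forall s, #|s| = 3 -> cnt B s <= 2.
Proof.
elim=> {B} [t Ht | B sg v HB IH Hs [t0 t0B st0] cs Hv] s s3.
  rewrite /cnt; apply: (@leq_trans 1) => //; rewrite -(cards1 t); apply: subset_leq_card.
  by apply/subsetP=> x; rewrite inE => /andP[].
rewrite glue_cnt //.
case sN: (s \subset v |: sg); last by rewrite addn0; apply: leq_trans (IH s s3) _.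
case vs: (v \in s).
  rewrite cntE0 // => t tB; apply/negP=> /subsetP /(_ v vs); apply/negP; exact: Hv.
have ssg : s \subset sg.
  apply/subsetP=> z zs; move: (subsetP sN z zs); rewrite !inE; case/orP=> // /eqP zv.
  by move: vs; rewrite -zv zs.
have -> : s = sg by apply: sub_eq_card => //; rewrite s3 Hs.
by rewrite /cnt cs.
Qed.

Lemma SB_clique B : stacked_ball B -> forall K : {set W}, #|K| = 4 ->
  (forall x y, x \in K -> y \in K -> cov B x y) -> K \in B.
Proof.
elim=> {B} [t Ht | B sg v HB IH Hs [t0 t0B st0] cs Hv] K K4 HK.
  have Kt : K \subset t.
    apply/subsetP=> x xK; case/existsP: (HK x x xK xK) => t'; rewrite !inE.
    by case/andP=> /eqP-> /andP[].
  by rewrite inE (sub_eq_card Kt) ?K4 ?Ht.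
have vB y : ~~ cov B v y.
  by apply/negP=> /existsP[t /andP[tB /andP[vt _]]]; move: (Hv t tB); rewrite vt.
case vK: (v \in K).
  have KN : K \subset v |: sg.
    apply/subsetP=> y yK; move: (HK v y vK yK); rewrite covU1 (negbTE (vB y)) /=.
    by case/andP.
  by rewrite in_setU1 (sub_eq_card KN) ?eqxx // K4 cardsU1 (glue_vs t0B st0 Hv) Hs.
rewrite in_setU1 IH ?orbT // => x y xK yK.
move: (HK x y xK yK); rewrite covU1; case/orP=> // /andP[xN yN].
have xs : x \in sg by move: xN; rewrite !inE; case/orP=> // /eqP xv; move: vK; rewrite -xv xK.
have ys : y \in sg by move: yN; rewrite !inE; case/orP=> // /eqP yv; move: vK; rewrite -yv yK.
by apply/existsP; exists t0; rewrite t0B (subsetP st0 x xs) (subsetP st0 y ys).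
Qed.

Lemma SB_C4 B : stacked_ball B -> forall p1 p2 p3 p4,
  cov B p1 p2 -> cov B p2 p3 -> cov B p3 p4 -> cov B p4 p1 ->
  ~~ cov B p1 p3 -> ~~ cov B p2 p4 -> False.
Proof.
elim=> {B} [t Ht | B sg v HB IH Hs [t0 t0B st0] cs Hv] p1 p2 p3 p4.
  move=> /existsP[t1]; rewrite !inE => /andP[/eqP-> /andP[h1 h2]].
  move=> /existsP[t2]; rewrite !inE => /andP[/eqP-> /andP[_ h3]].
  move=> _ _ /negP n13 _; apply: n13; apply/existsP; exists t; by rewrite !inE eqxx h1 h3.
have vB y : ~~ cov B v y.
  by apply/negP=> /existsP[t /andP[tB /andP[vt _]]]; move: (Hv t tB); rewrite vt.
have vB' y : ~~ cov B y v.
  by apply/negP=> /existsP[t /andP[tB /andP[_ vt]]]; move: (Hv t tB); rewrite vt.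
have inN x y : x != v -> y != v -> cov ((v |: sg) |: B) x y -> cov B x y.
  move=> xv yv; rewrite covU1; case/orP=> // /andP[]; rewrite !inE (negbTE xv) (negbTE yv) /=.
  by move=> xs ys; apply/existsP; exists t0; rewrite t0B (subsetP st0 x xs) (subsetP st0 y ys).
have mN y : cov ((v |: sg) |: B) v y -> y \in v |: sg.
  by rewrite covU1 (negbTE (vB y)) /= => /andP[].
have mN' y : cov ((v |: sg) |: B) y v -> y \in v |: sg.
  by rewrite covU1 (negbTE (vB' y)) /= => /andP[].
have nN x y : x \in v |: sg -> y \in v |: sg -> cov ((v |: sg) |: B) x y.
  by move=> xN yN; rewrite covU1 xN yN orbT.
move=> c12 c23 c34 c41 n13 n24.
case: (p1 =P v) => [e1|/eqP v1].
  by subst p1; move: n24; rewrite (nN _ _ (mN p2 c12) (mN' p4 c41)).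
case: (p2 =P v) => [e2|/eqP v2].
  by subst p2; move: n13; rewrite (nN _ _ (mN' p1 c12) (mN p3 c23)).
case: (p3 =P v) => [e3|/eqP v3].
  by subst p3; move: n24; rewrite (nN _ _ (mN' p2 c23) (mN p4 c34)).
case: (p4 =P v) => [e4|/eqP v4].
  by subst p4; move: n13; rewrite (nN _ _ (mN p1 c41) (mN' p3 c34)).
apply: (IH p1 p2 p3 p4); try exact: inN.
- by apply: contra n13; rewrite covU1 => ->.
- by apply: contra n24; rewrite covU1 => ->.
Qed.

End Ball.

Section Ball2.
Variable W : finType.
Implicit Types (B : {set {set W}}) (s t X : {set W}).

Lemma set3E (x y z : W) : [set x; y; z] = x |: (y |: [set z]).
Proof. by apply/setP=> e; rewrite !inE orbA. Qed.

Lemma card3 (x y z : W) : x != y -> x != z -> y != z -> #|[set x; y; z]| = 3.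
Proof.
move=> xy xz yz; rewrite set3E !cardsU1 cards1 !inE.
by rewrite (negbTE xy) (negbTE xz) (negbTE yz).
Qed.

Lemma triple_eq s (x y z : W) : #|s| = 3 -> x \in s -> y \in s -> z \in s ->
  x != y -> x != z -> y != z -> s = [set x; y; z].
Proof.
move=> s3 xs ys zs xy xz yz; apply/esym/sub_eq_card; last by rewrite s3 card3.
by apply/subsetP=> e; rewrite !inE -!orbA => /or3P[] /eqP->.
Qed.

Lemma card_le1_eq (A : {set W}) x y : #|A| <= 1 -> x \in A -> y \in A -> x = y.
Proof. by move=> /card_le1_eqP H xA yA; apply: H. Qed.

Lemma pick_other s (x y : W) : 2 < #|s| -> exists z, [/\ z \in s, z != x & z != y].
Proof.
move=> c; have: 0 < #|s :\ x :\ y|.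
  move: c; rewrite (cardsD1 x s) (cardsD1 y (s :\ x)); case: (_ \in _); case: (_ \in _) => /=; lia.
rewrite card_gt0 => /set0Pn[z]; rewrite !inE => /and3P[zy zx zs]; by exists z.
Qed.

Lemma inbd B s : (s \in boundary B) = (#|s| == 3) && (cnt B s == 1).
Proof. by rewrite inE. Qed.

Variables (B0 : {set {set W}}) (sg : {set W}) (v : W) (t0 : {set W}).
Hypotheses (Hs : #|sg| = 3) (t0B : t0 \in B0) (st0 : sg \subset t0)
  (cs : cnt B0 sg = 1) (Hv : forall t, t \in B0 -> v \notin t).

Lemma vsg : v \notin sg. Proof using Hs t0B st0 cs Hv. exact: glue_vs t0B st0 Hv. Qed.

Lemma bd_v s : #|s| = 3 -> v \in s -> s \subset (v |: sg) -> s \in boundary ((v |: sg) |: B0).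
Proof using Hs t0B st0 cs Hv.
move=> s3 vs sN; rewrite inbd s3 eqxx /= glue_cnt // sN cntE0 // => t tB.
by apply/negP=> /subsetP/(_ v vs); apply/negP; apply: Hv.
Qed.

Lemma sub_sg s : #|s| = 3 -> v \notin s -> s \subset (v |: sg) -> s = sg.
Proof using Hs t0B st0 cs Hv.
move=> s3 vs sN; apply: sub_eq_card; last by rewrite s3 Hs.
apply/subsetP=> z zs; move: (subsetP sN z zs); rewrite !inE; case/orP=> // /eqP zv.
by move: vs; rewrite -zv zs.
Qed.

Lemma bd_keep s : s \in boundary B0 -> s != sg -> s \in boundary ((v |: sg) |: B0).
Proof using Hs t0B st0 cs Hv.
rewrite !inbd => /andP[/eqP s3 /eqP c1] ne; rewrite s3 eqxx /= glue_cnt // c1.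
case sN: (s \subset (v |: sg)) => //.
have: 0 < cnt B0 s by rewrite c1.
rewrite cnt_gt0 => /existsP[t /andP[tB st]].
have vs : v \notin s by apply/negP=> /(subsetP st) vt; move: (@Hv t tB); rewrite vt.
by move: ne; rewrite (sub_sg s3 vs sN) eqxx.
Qed.

Lemma bd_char s : s \in boundary ((v |: sg) |: B0) ->
  (v \in s) && (s \subset (v |: sg)) \/ [/\ v \notin s, s \in boundary B0 & s != sg].
Proof using Hs t0B st0 cs Hv.
rewrite !inbd glue_cnt // => /andP[/eqP s3 /eqP c1].
case vs: (v \in s).
  left; rewrite /=; move: c1; rewrite cntE0; first by case: (s \subset (v |: sg)).
  by move=> t tB; apply/negP=> /subsetP/(_ v vs); apply/negP; apply: Hv.
right; move: c1; case sN: (s \subset (v |: sg)) => c1.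
  by move: c1; rewrite (sub_sg s3 (negbT vs) sN) cs.
move: c1; rewrite addn0 => c1; rewrite s3 c1 eqxx; split => //.
by apply: contraNneq (negbT sN) => ->; apply: subsetUr.
Qed.

End Ball2.

Section Ball3.
Variable W : finType.
Implicit Types (B : {set {set W}}) (s t X : {set W}).

Lemma SB_nocd B : stacked_ball B -> forall (P Q : {set W}) (c d : W),
  P \in B -> Q \in B -> c \in P -> c \notin Q -> d \in Q -> d \notin P ->
  #|P :&: Q| = 3 -> forall t, t \in B -> ~~ ((c \in t) && (d \in t)).
Proof.
move=> HB; have Hc := SB_card HB; move: Hc.
elim: HB => {B} [t Ht | B sg v HB IH Hs [t0 t0B st0] cs Hv] Hc P Q c d PB QB cP cQ dQ dP PQ3.
  by move: PB QB; rewrite !inE => /eqP PE /eqP QE; move: cQ; rewrite QE -PE cP.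
have HcB : forall t, t \in B -> #|t| = 4 by move=> t tB; apply: Hc; rewrite in_setU1 tB orbT.
have one X Y x y : X \in v |: sg |: B -> #|X :&: Y| = 3 -> x \in X -> x \notin Y ->
    y \in X -> y \notin Y -> x = y.
  move=> XB XY xX xY yX yY; apply: (@card_le1_eq _ (X :\: Y)); last 2 first.
  - by rewrite inE xX xY.
  - by rewrite inE yX yY.
  by move: (cardsID Y X); rewrite XY (Hc X XB); lia.
move: PB QB; rewrite !in_setU1 => /orP[/eqP PN|PB] /orP[/eqP QN|QB].
- by move: cQ; rewrite QN -PN cP.
- have vQ := Hv Q QB.
  have vc : v = c.
    apply: (one P Q) => //; [by rewrite in_setU1 PN eqxx | by rewrite PN setU11].
  move=> t; rewrite in_setU1 => /orP[/eqP->|tB]; first by rewrite -PN (negbTE dP) andbF.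
  by rewrite -vc (negbTE (Hv t tB)).
- have vP := Hv P PB.
  have vd : v = d.
    apply: (one Q P) => //; [by rewrite in_setU1 QN eqxx | by rewrite setIC | by rewrite QN setU11].
  move=> t; rewrite in_setU1 => /orP[/eqP->|tB]; first by rewrite -QN (negbTE cQ).
  by rewrite -vd (negbTE (Hv t tB)) andbF.
- have IH' := IH HcB P Q c d PB QB cP cQ dQ dP PQ3.
  move=> t; rewrite in_setU1 => /orP[/eqP->|]; last exact: IH'.
  apply/negP=> /andP[cN dN].
  have cs' : c \in sg.
    move: cN; rewrite !inE; case/orP=> // /eqP cv; move: (Hv P PB); by rewrite -cv cP.
  have ds' : d \in sg.
    move: dN; rewrite !inE; case/orP=> // /eqP dv; move: (Hv Q QB); by rewrite -dv dQ.
  by move: (IH' t0 t0B); rewrite (subsetP st0 c cs') (subsetP st0 d ds').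
Qed.

Lemma SB_edge B : stacked_ball B -> forall u w : W, u != w -> cov B u w ->
  exists2 s, s \in boundary B & (u \in s) && (w \in s).
Proof.
move=> HB; have Hc := SB_card HB; move: Hc.
elim: HB => {B} [t Ht | B sg v HB IH Hs [t0 t0B st0] cs Hv] Hc u w uw.
  case/existsP=> t'; rewrite !inE => /andP[/eqP-> /andP[ut wt]].
  have := @pick_other _ t u w; rewrite Ht => /(_ isT) [z [zt zu zw]].
  exists [set u; w; z]; last by rewrite !inE !eqxx /= ?orbT.
  have h1 : u != z by rewrite eq_sym.
  have h2 : w != z by rewrite eq_sym.
  rewrite inbd (card3 uw h1 h2) eqxx /= /cnt.
  have -> : [set t1 in [set t] | [set u; w; z] \subset t1] = [set t].
    apply/setP=> t1; rewrite !inE; case: eqP => //= ->.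
    by apply/subsetP=> e; rewrite !inE -!orbA => /or3P[] /eqP->.
  by rewrite cards1.
have HcB : forall t, t \in B -> #|t| = 4 by move=> t tB; apply: Hc; rewrite in_setU1 tB orbT.
have vsg := vsg Hs t0B st0 cs Hv.
have bv := bd_v Hs t0B st0 cs Hv.
have vnot x : x \in sg -> x != v by move=> xs; apply: contraNneq vsg => <-.
have trip x y : x \in sg -> y \in sg -> x != y ->
    exists2 s, s \in boundary (v |: sg |: B) & (x \in s) && (y \in s).
  move=> xs ys xy; exists [set v; x; y]; last by rewrite !inE !eqxx /= ?orbT.
  apply: bv; first by rewrite card3 // eq_sym ?vnot.
    by rewrite !inE eqxx.
  by apply/subsetP=> e; rewrite !inE -!orbA => /or3P[] /eqP->; rewrite ?eqxx ?xs ?ys ?orbT.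
rewrite covU1 => /orP[/(IH HcB u w uw)[s sB /andP[us ws]]|/andP[uN wN]].
  case: (s =P sg) => [E|/eqP ne]; last by exists s; rewrite ?us ?ws // (bd_keep Hs t0B st0 cs Hv).
  by apply: trip => //; rewrite -E.
have piv x y : y \in v |: sg -> y != v -> x = v ->
    exists2 s, s \in boundary (v |: sg |: B) & (x \in s) && (y \in s).
  move=> yN yv ->; have ys : y \in sg by move: yN; rewrite !inE (negbTE yv).
  have := @pick_other _ sg y y; rewrite Hs => /(_ isT) [z [zs zy _]].
  exists [set v; y; z]; last by rewrite !inE !eqxx /= ?orbT.
  apply: bv; first by rewrite card3 ?vnot // eq_sym ?vnot // eq_sym.
    by rewrite !inE eqxx.
  by apply/subsetP=> e; rewrite !inE -!orbA => /or3P[] /eqP->; rewrite ?eqxx ?zs ?ys ?orbT.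
case: (u =P v) => [uv|/eqP uv].
  by apply: piv => //; rewrite -uv eq_sym.
case: (w =P v) => [wv|/eqP wv].
  have [s sB /andP[a1 a2]] := piv w u uN uv wv; exists s => //; by rewrite a1 a2.
apply: trip => //.
- by move: uN; rewrite !inE (negbTE uv).
- by move: wN; rewrite !inE (negbTE wv).
Qed.

End Ball3.

Section Link.
Variable W : finType.
Implicit Types (B : {set {set W}}) (s t X : {set W}).

Lemma G3 (N s1 s2 s3 : {set W}) (u w : W) : #|N| = 4 -> u != w ->
  s1 \subset N -> s2 \subset N -> s3 \subset N ->
  #|s1| = 3 -> #|s2| = 3 -> #|s3| = 3 ->
  (u \in s1) && (w \in s1) -> (u \in s2) && (w \in s2) -> (u \in s3) && (w \in s3) ->
  [\/ s1 = s2, s1 = s3 | s2 = s3].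
Proof.
move=> N4 uw sN1 sN2 sN3 c1 c2 c3 /andP[u1 w1] /andP[u2 w2] /andP[u3 w3].
have getz s : #|s| = 3 -> u \in s -> w \in s ->
    exists2 z, z \in s & [/\ z != u, z != w & s = [set u; w; z]].
  move=> cs us ws; have := @pick_other _ s u w; rewrite cs => /(_ isT) [z [zs zu zw]].
  exists z => //; split => //; apply: triple_eq => //; by rewrite eq_sym.
have [z1 z1s [z1u z1w E1]] := getz _ c1 u1 w1.
have [z2 z2s [z2u z2w E2]] := getz _ c2 u2 w2.
have [z3 z3s [z3u z3w E3]] := getz _ c3 u3 w3.
case: (z1 =P z2) => [e|/eqP n12]; first by constructor 1; rewrite E1 E2 e.
case: (z1 =P z3) => [e|/eqP n13]; first by constructor 2; rewrite E1 E3 e.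
case: (z2 =P z3) => [e|/eqP n23]; first by constructor 3; rewrite E2 E3 e.
have : 2 < #|N :\ u :\ w|.
  apply/card_gt2P; exists z1, z2, z3; split; last by split => //; rewrite eq_sym.
  by split; rewrite !inE ?z1u ?z1w ?z2u ?z2w ?z3u ?z3w /=;
    [apply: (subsetP sN1) | apply: (subsetP sN2) | apply: (subsetP sN3)].
have uN : u \in N by apply: (subsetP sN1).
have wN : w \in N by apply: (subsetP sN1).
move: N4; rewrite (cardsD1 u N) (cardsD1 w (N :\ u)) uN !inE (eq_sym w) uw wN /=.
move=> e; have -> : #|N :\ u :\ w| = 2 by move: e; clear; lia.
by [].
Qed.

Lemma bd_sub B s : s \in boundary B -> exists2 t, t \in B & s \subset t.
Proof.
rewrite inbd => /andP[_ /eqP c]; have : 0 < cnt B s by rewrite c.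
by rewrite cnt_gt0 => /existsP[t /andP[tB st]]; exists t.
Qed.

Lemma SB_link B : stacked_ball B -> forall (u w : W) s1 s2 s3, u != w ->
  s1 \in boundary B -> s2 \in boundary B -> s3 \in boundary B ->
  (u \in s1) && (w \in s1) -> (u \in s2) && (w \in s2) -> (u \in s3) && (w \in s3) ->
  [\/ s1 = s2, s1 = s3 | s2 = s3].
Proof.
move=> HB; have Hc := SB_card HB; move: Hc.
elim: HB => {B} [t Ht | B sg v HB IH Hs [t0 t0B st0] cs Hv] Hc u w s1 s2 s3 uw.
  have sub s : s \in boundary [set t] -> s \subset t /\ #|s| = 3.
    move=> sb; case: (bd_sub sb) => t'; rewrite in_set1 => /eqP-> st; split => //.
    by move: sb; rewrite inbd => /andP[/eqP].
  move=> /sub[a1 a2] /sub[a3 a4] /sub[a5 a6] h1 h2 h3; exact: (G3 Ht uw a1 a3 a5 a2 a4 a6 h1 h2 h3).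
have HcB : forall t, t \in B -> #|t| = 4 by move=> t tB; apply: Hc; rewrite in_setU1 tB orbT.
have N4 : #|v |: sg| = 4 by apply: Hc; rewrite in_setU1 eqxx.
have card s : s \in boundary (v |: sg |: B) -> #|s| = 3 by rewrite inbd => /andP[/eqP].
have ch := bd_char Hs t0B st0 cs Hv.
move=> b1 b2 b3 h1 h2 h3.
have allv : (u == v) || (w == v) -> [\/ s1 = s2, s1 = s3 | s2 = s3].
  move=> uwv.
  have t1 s : s \in boundary (v |: sg |: B) -> (u \in s) && (w \in s) -> s \subset v |: sg.
    move=> sb /andP[us ws]; case: (ch s sb) => [/andP[]//|[vs _ _]].
    by move: uwv vs; case/orP=> /eqP <-; rewrite ?us ?ws.
  by apply: (G3 N4 uw (t1 _ b1 h1) (t1 _ b2 h2) (t1 _ b3 h3)) => //; apply: card.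
case: (boolP ((u == v) || (w == v))) => [|]; first exact: allv.
rewrite negb_or => /andP[uv wv].
have T1 s : s \in boundary (v |: sg |: B) -> (u \in s) && (w \in s) -> v \in s ->
   s = [set v; u; w].
  move=> sb /andP[us ws] vs; apply: triple_eq => //; first exact: card.
  by rewrite eq_sym. by rewrite eq_sym.
have T1sg s : s \in boundary (v |: sg |: B) -> (u \in s) && (w \in s) -> v \in s ->
   (u \in sg) && (w \in sg).
  move=> sb /andP[us ws] vs; case: (ch s sb) => [/andP[_ sN]|[]]; last by rewrite vs.
  move: (subsetP sN u us) (subsetP sN w ws); rewrite !inE (negbTE uv) (negbTE wv) /=.
  by move=> -> ->.
have T2 s : s \in boundary (v |: sg |: B) -> v \notin s -> s \in boundary B /\ s != sg.
  move=> sb vs; case: (ch s sb) => [/andP[]|[]//]; by rewrite (negbTE vs).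
have sgb : sg \in boundary B by rewrite inbd Hs eqxx /= /cnt cs.
have one sa sb sc : sa \in boundary (v |: sg |: B) -> sb \in boundary (v |: sg |: B) ->
    sc \in boundary (v |: sg |: B) ->
    (u \in sa) && (w \in sa) -> (u \in sb) && (w \in sb) -> (u \in sc) && (w \in sc) ->
    v \in sa -> v \notin sb -> v \notin sc -> sb = sc.
  move=> ba bb bc ha hb hc va vb vc.
  have [bb' nb] := T2 _ bb vb; have [bc' nc] := T2 _ bc vc.
  case: (IH HcB u w sg sb sc uw sgb bb' bc' (T1sg _ ba ha va) hb hc) => // E.
  - by move: nb; rewrite -E eqxx.
  - by move: nc; rewrite -E eqxx.
case: (boolP (v \in s1)) => v1; case: (boolP (v \in s2)) => v2; case: (boolP (v \in s3)) => v3.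
- by constructor 1; rewrite (T1 _ b1 h1 v1) (T1 _ b2 h2 v2).
- by constructor 1; rewrite (T1 _ b1 h1 v1) (T1 _ b2 h2 v2).
- by constructor 2; rewrite (T1 _ b1 h1 v1) (T1 _ b3 h3 v3).
- by constructor 3; apply: (one s1).
- by constructor 3; rewrite (T1 _ b2 h2 v2) (T1 _ b3 h3 v3).
- by constructor 2; apply: (one s2).
- by constructor 1; apply: (one s3).
- have [b1' _] := T2 _ b1 v1; have [b2' _] := T2 _ b2 v2; have [b3' _] := T2 _ b3 v3.
  exact: (IH HcB u w s1 s2 s3 uw b1' b2' b3' h1 h2 h3).
Qed.

End Link.

Ltac neqs := repeat match goal with
  | H : is_true (?x != ?y) |- context [?x == ?y] => rewrite (negbTE H)
  | H : is_true (?x != ?y) |- context [?y == ?x] => rewrite [y == x]eq_sym (negbTE H)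
  end.

Section Ind.
Variable W : finType.
Implicit Types (B : {set {set W}}) (s t X : {set W}).

Lemma ind3 s (p1 p2 p3 : W) : p1 != p2 -> p1 != p3 -> p2 != p3 ->
  #|s :&: [set p1; p2; p3]| = (p1 \in s) + (p2 \in s) + (p3 \in s).
Proof. by move=> *; rewrite !cardsIU1r cardsI1 !inE; neqs; rewrite /= !andbT. Qed.

Lemma ind4 s (p1 p2 p3 p4 : W) : p1 != p2 -> p1 != p3 -> p1 != p4 -> p2 != p3 -> p2 != p4 -> p3 != p4 ->
  #|s :&: [set p1; p2; p3; p4]| = (p1 \in s) + (p2 \in s) + (p3 \in s) + (p4 \in s).
Proof. by move=> *; rewrite !cardsIU1r cardsI1 !inE; neqs; rewrite /= !andbT. Qed.

Lemma ind5 s (p1 p2 p3 p4 p5 : W) : p1 != p2 -> p1 != p3 -> p1 != p4 -> p1 != p5 ->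
  p2 != p3 -> p2 != p4 -> p2 != p5 -> p3 != p4 -> p3 != p5 -> p4 != p5 ->
  #|s :&: [set p1; p2; p3; p4; p5]| = (p1 \in s) + (p2 \in s) + (p3 \in s) + (p4 \in s) + (p5 \in s).
Proof. by move=> *; rewrite !cardsIU1r cardsI1 !inE; neqs; rewrite /= !andbT. Qed.

Lemma card4 (p1 p2 p3 p4 : W) : p1 != p2 -> p1 != p3 -> p1 != p4 -> p2 != p3 -> p2 != p4 -> p3 != p4 ->
  #|[set p1; p2; p3; p4]| = 4.
Proof.
move=> *; rewrite -(setIid [set p1; p2; p3; p4]) ind4 //; by rewrite !inE !eqxx /= ?orbT.
Qed.

End Ind.

Section Flip.
Variable W : finType.
Implicit Types (B : {set {set W}}) (s t X : {set W}).

Lemma dist5 (a b c d x : W) : uniq [:: a; b; c; d; x] ->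
  (a != b) /\ (a != c) /\ (a != d) /\ (a != x) /\ (b != c) /\ (b != d) /\ (b != x) /\
  (c != d) /\ (c != x) /\ (d != x).
Proof.
move=> U; do 9 (split; first by apply/negP=> /eqP E; move: U; rewrite E /= !inE !eqxx /= ?orbT ?andbF).
by apply/negP=> /eqP E; move: U; rewrite E /= !inE !eqxx /= ?orbT ?andbF.
Qed.

Definition nocd B (c d : W) := forall t, t \in B -> ~~ ((c \in t) && (d \in t)).

Definition flipB B (a b c d x : W) :=
  [set a; c; d; x] |: ([set b; c; d; x] |: (B :\ [set a; b; c; x] :\ [set a; b; d; x])).

Lemma flip_cnt B (a b c d x : W) : uniq [:: a; b; c; d; x] ->
  [set a; b; c; x] \in B -> [set a; b; d; x] \in B -> nocd B c d -> forall s,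
  cnt (flipB B a b c d x) s =
  cnt B s - (s \subset [set a; b; c; x]) - (s \subset [set a; b; d; x])
    + (s \subset [set b; c; d; x]) + (s \subset [set a; c; d; x]).
Proof.
move=> U PB QB ncd s; have [ab [ac [ad [ax [bc [bd [bx [cd [cx dx]]]]]]]]] := dist5 U.
have nB (y : W) : [set y; c; d; x] \notin B.
  by apply/negP=> /ncd; rewrite !inE !eqxx /= ?orbT.
have PQ : [set a; b; d; x] != [set a; b; c; x].
  by apply/negP=> /eqP /setP /(_ d); rewrite !inE !eqxx /=; neqs.
have PQ' : [set a; c; d; x] != [set b; c; d; x].
  by apply/negP=> /eqP /setP /(_ a); rewrite !inE !eqxx /=; neqs.
rewrite /flipB cntU1 cntU1 cntD1 cntD1 PB !inE QB PQ /= !andbT.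
rewrite (negbTE (nB a)) (negbTE (nB b)) (negbTE PQ') !andbF !andbT.
by [].
Qed.

Lemma cnt_PQ B (a b c d x : W) : uniq [:: a; b; c; d; x] ->
  [set a; b; c; x] \in B -> [set a; b; d; x] \in B -> forall s,
  (s \subset [set a; b; c; x]) + (s \subset [set a; b; d; x]) <= cnt B s.
Proof.
move=> U PB QB s; have [ab [ac [ad [ax [bc [bd [bx [cd [cx dx]]]]]]]]] := dist5 U.
have PQ : [set a; b; c; x] != [set a; b; d; x].
  by apply/negP=> /eqP /setP /(_ c); rewrite !inE !eqxx /=; neqs.
case sP: (s \subset _); case sQ: (s \subset _) => //=.
- exact: cnt_ge2 PB QB PQ sP sQ.
- by rewrite cnt_gt0; apply/existsP; exists [set a; b; c; x]; rewrite PB sP.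
- by rewrite cnt_gt0; apply/existsP; exists [set a; b; d; x]; rewrite QB sQ.
Qed.

End Flip.

Section Flip2.
Variable W : finType.
Implicit Types (B : {set {set W}}) (s t X : {set W}).

Lemma flip_bd B (a b c d x : W) : uniq [:: a; b; c; d; x] ->
  [set a; b; c; x] \in B -> [set a; b; d; x] \in B -> nocd B c d ->
  cnt B [set a; b; x] <= 2 -> forall s, #|s| = 3 ->
  s != [set a; b; c] -> s != [set a; b; d] -> s != [set a; c; d] -> s != [set b; c; d] ->
  (cnt (flipB B a b c d x) s == 1) = (cnt B s == 1).
Proof.
move=> U PB QB ncd c2 s s3 n1 n2 n3 n4.
have [ab [ac [ad [ax [bc [bd [bx [cd [cx dx]]]]]]]]] := dist5 U.
rewrite (flip_cnt U PB QB ncd).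
have hge := cnt_PQ U PB QB s.
have hsum : (a \in s) + (b \in s) + (c \in s) + (d \in s) + (x \in s) <= 3.
  by rewrite -ind5 // -s3 subset_leq_card // subsetIl.
have tri (p q r : W) : p != q -> p != r -> q != r -> s != [set p; q; r] -> ~~ [&& p \in s, q \in s & r \in s].
  move=> pq pr qr ne; apply/negP=> /and3P[ps qs rs]; move: ne.
  by rewrite (triple_eq s3 ps qs rs pq pr qr) eqxx.
have h1 := tri _ _ _ ab ac bc n1.
have h2 := tri _ _ _ ab ad bd n2.
have h3 := tri _ _ _ ac ad cd n3.
have h4 := tri _ _ _ bc bd cd n4.
have habx : [&& a \in s, b \in s & x \in s] ==> (cnt B s == 2).
  apply/implyP=> /and3P[as' bs xs]; rewrite (triple_eq s3 as' bs xs ab ax bx) eqn_leq c2 /=.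
  have := cnt_PQ U PB QB [set a; b; x].
  have -> : [set a; b; x] \subset [set a; b; c; x] by apply/subsetP=> e; rewrite !inE -!orbA => /or3P[]->; rewrite ?orbT.
  have -> : [set a; b; x] \subset [set a; b; d; x] by apply/subsetP=> e; rewrite !inE -!orbA => /or3P[]->; rewrite ?orbT.
  by [].
have hcd : (c \in s) && (d \in s) ==> (cnt B s == 0).
  apply/implyP=> /andP[cs ds]; rewrite cntE0 // => t tB; apply: contra (ncd t tB).
  by move=> /subsetP st; rewrite (st c cs) (st d ds).
rewrite !subsetE_card !ind4 // s3 in hge *.
move: hge hsum h1 h2 h3 h4 habx hcd.
move: (a \in s) (b \in s) (c \in s) (d \in s) (x \in s) (cnt B s) => ia ib ic id ix n.
clear -ia ib ic id ix n.
by case: ia; case: ib; case: ic; case: id; case: ix => /=; lia.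
Qed.

End Flip2.

Section SL.
Variable W : finType.
Implicit Types (B : {set {set W}}) (s t X : {set W}).

Lemma glue' B (sg : {set W}) (v : W) : stacked_ball B -> #|sg| = 3 -> cnt B sg = 1 ->
  (forall t, t \in B -> v \notin t) -> stacked_ball ((v |: sg) |: B).
Proof.
move=> HB s3 c1 Hv; apply: sb_glue => //.
have : 0 < cnt B sg by rewrite c1.
by rewrite cnt_gt0 => /existsP[t /andP[tB st]]; exists t.
Qed.

Lemma cnt_single s X : s \subset X -> cnt [set X] s = 1.
Proof.
move=> sX; rewrite /cnt (_ : [set t in [set X] | s \subset t] = [set X]) ?cards1 //.
by apply/setP=> t; rewrite !inE; case: eqP => // ->.
Qed.

Lemma set4E (p q r u : W) : p |: [set q; r; u] = [set p; q; r; u].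
Proof. by apply/setP=> e; rewrite !inE !orbA. Qed.

Lemma sub3_4 (p q r u : W) (s : {set W}) : s = [set p; q; r] \/ s = [set p; q; u] \/ s = [set p; r; u] \/ s = [set q; r; u] ->
  s \subset [set p; q; r; u].
Proof.
by move=> H; apply/subsetP=> e; case: H => [->|[->|[->|->]]]; rewrite !inE -?orbA => /or3P[]->; rewrite ?orbT.
Qed.

End SL.


Section SL2.
Variable W : finType.
Implicit Types (B : {set {set W}}) (s t X : {set W}).

Lemma SL B : stacked_ball B -> forall a b c d x : W, uniq [:: a; b; c; d; x] ->
  (forall t, t \in B -> c \notin t) -> [set a; b; d; x] \in B ->
  cnt B [set a; b; d] = 1 -> cnt B [set a; b; x] = 1 ->
  stacked_ball ([set a; c; d; x] |: ([set b; c; d; x] |: (B :\ [set a; b; d; x]))).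
Proof.
elim=> {B} [t Ht | B sg v HB IH Hs [t0 t0B st0] cs Hv] a b c d x U cnew QB c1 c2;
  have [ab [ac [ad [ax [bc [bd [bx [cd [cx dx]]]]]]]]] := dist5 U.
  move: QB; rewrite in_set1 => /eqP <-; rewrite setDv setU0.
  have -> : [set a; c; d; x] |: [set [set b; c; d; x]] = (b |: [set c; d; x]) |: [set [set a; c; d; x]].
    by rewrite set4E setUC.
  apply: glue'; first by apply: sb_base; rewrite card4.
  - by rewrite card3.
  - by apply: cnt_single; apply/subsetP=> e; rewrite !inE -!orbA => /or3P[]->; rewrite ?orbT.
  - by move=> t'; rewrite in_set1 => /eqP->; rewrite !inE; neqs.
have vsg := glue_vs t0B st0 Hv.
have {}cs : cnt B sg = 1 := cs.
have cnB : forall t, t \in B -> c \notin t by move=> t tB; apply: cnew; rewrite in_setU1 tB orbT.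
have cB0 s : c \in s -> cnt B s = 0.
  move=> cs'; apply: cntE0 => t tB; apply/negP=> /subsetP/(_ c cs'); apply/negP; exact: cnB.
move: QB; rewrite in_setU1 => /orP[/eqP QN|QB].
-
  have inQ p : p \in [set a; b; d; x] -> p != v -> p \in sg.
    by rewrite QN !inE => /orP[/eqP->|//]; rewrite eqxx.
  have vQ : v \in [set a; b; d; x] by rewrite QN !inE eqxx.
  have c2' s : s \subset [set a; b; d; x] -> cnt B s + 1 = cnt ((v |: sg) |: B) s.
    by move=> sQ; rewrite glue_cnt // -QN sQ.
  have sgQ : sg \subset [set a; b; d; x] by rewrite QN subsetUr.
  have csg2 : cnt ((v |: sg) |: B) sg = 2 by rewrite -c2' // cs.
  have tr p q r : p \in [set a; b; d; x] -> q \in [set a; b; d; x] -> r \in [set a; b; d; x] ->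
    p != v -> q != v -> r != v -> p != q -> p != r -> q != r -> sg = [set p; q; r].
    move=> pQ qQ rQ pv qv rv pq pr qr; apply: triple_eq => //; exact: inQ.
  have QNB : [set a; b; d; x] \notin B by rewrite QN; apply: glue_NB.
  move: vQ; rewrite !inE -!orbA => /or4P[] /eqP ev.
  +
    have E : sg = [set b; d; x] by apply: tr; rewrite ?ev ?inE ?eqxx ?orbT //=; neqs.
    have -> : (v |: sg |: B) :\ [set a; b; d; x] = B by rewrite QN setU1K //; apply: glue_NB.
    have -> : [set a; c; d; x] |: ([set b; c; d; x] |: B) = (a |: [set c; d; x]) |: ((c |: [set b; d; x]) |: B).
      have e2 : c |: [set b; d; x] = [set b; c; d; x].
        by apply/setP=> e; rewrite !inE; case: (e == b); case: (e == c); case: (e == d); case: (e == x).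
      by rewrite set4E e2.
    have HB1 : stacked_ball ((c |: [set b; d; x]) |: B).
      by apply: glue' => //; rewrite ?card3 // -E.
    apply: glue' => //; first by rewrite card3.
    * have sub : [set c; d; x] \subset c |: [set b; d; x].
        by apply/subsetP=> e; rewrite !inE -!orbA => /or3P[]->; rewrite ?orbT.
      by rewrite glue_cnt // cB0 ?inE ?eqxx // sub.
    * move=> t; rewrite in_setU1 => /orP[/eqP->|tB]; first by rewrite !inE; neqs.
      by rewrite -ev; apply: Hv.
  +
    have E : sg = [set a; d; x] by apply: tr; rewrite ?ev ?inE ?eqxx ?orbT //=; neqs.
    have -> : (v |: sg |: B) :\ [set a; b; d; x] = B by rewrite QN setU1K //; apply: glue_NB.
    have -> : [set a; c; d; x] |: ([set b; c; d; x] |: B) = (b |: [set c; d; x]) |: ((c |: [set a; d; x]) |: B).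
      have e2 : c |: [set a; d; x] = [set a; c; d; x].
        by apply/setP=> e; rewrite !inE; case: (e == a); case: (e == c); case: (e == d); case: (e == x).
      by rewrite set4E e2 setUCA.
    have HB1 : stacked_ball ((c |: [set a; d; x]) |: B).
      by apply: glue' => //; rewrite ?card3 // -E.
    apply: glue' => //; first by rewrite card3.
    * have sub : [set c; d; x] \subset c |: [set a; d; x].
        by apply/subsetP=> e; rewrite !inE -!orbA => /or3P[]->; rewrite ?orbT.
      by rewrite glue_cnt // cB0 ?inE ?eqxx // sub.
    * move=> t; rewrite in_setU1 => /orP[/eqP->|tB]; first by rewrite !inE; neqs.
      by rewrite -ev; apply: Hv.
  +
    have E : sg = [set a; b; x] by apply: tr; rewrite ?ev ?inE ?eqxx ?orbT //=; neqs.
    by move: c2; rewrite -E csg2.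
  +
    have E : sg = [set a; b; d] by apply: tr; rewrite ?ev ?inE ?eqxx ?orbT //=; neqs.
    by move: c1; rewrite -E csg2.
-
  have NQ : v |: sg != [set a; b; d; x].
    by apply: contraNneq (Hv _ QB) => <-; rewrite setU11.
  have cntB s : s \subset [set a; b; d; x] -> cnt ((v |: sg) |: B) s = 1 -> cnt B s = 1.
    move=> sQ; rewrite glue_cnt // => e; apply/eqP; rewrite eqn_leq; apply/andP; split; first by rewrite -e leq_addr.
    by rewrite cnt_gt0; apply/existsP; exists [set a; b; d; x]; rewrite QB sQ.
  have IH' := IH a b c d x U cnB QB (cntB _ (sub3_4 (or_introl erefl)) c1)
     (cntB _ (sub3_4 (or_intror (or_introl erefl))) c2).
  have -> : [set a; c; d; x] |: ([set b; c; d; x] |: ((v |: sg |: B) :\ [set a; b; d; x])) =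
      (v |: sg) |: ([set a; c; d; x] |: ([set b; c; d; x] |: (B :\ [set a; b; d; x]))).
    apply/setP=> T; rewrite !inE; case: (T =P v |: sg) => [->|_]; first by rewrite NQ !orbT.
    by [] .
  apply: glue' => //.
  +
    have csg : c \notin sg by apply/negP=> /(subsetP st0) ct; move: (cnB _ t0B); rewrite ct.
    have nB (y : W) : [set y; c; d; x] \notin B by apply/negP=> /cnB; rewrite !inE eqxx /= orbT.
    have PQ' : [set a; c; d; x] != [set b; c; d; x].
      by apply/negP=> /eqP /setP /(_ a); rewrite !inE !eqxx /=; neqs.
    rewrite cntU1 cntU1 cntD1 QB !inE (negbTE (nB a)) (negbTE (nB b)) !andbF (negbTE PQ') /= !andbT cs.
    have hsum : (a \in sg) + (b \in sg) + (c \in sg) + (d \in sg) + (x \in sg) <= 3.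
      by rewrite -ind5 // -Hs subset_leq_card // subsetIl.
    have tri (p q r : W) : p != q -> p != r -> q != r ->
        [set p; q; r] \subset [set a; b; d; x] -> cnt (v |: sg |: B) [set p; q; r] = 1 ->
        ~~ [&& p \in sg, q \in sg & r \in sg].
      move=> pq pr qr sub ce; apply/negP=> /and3P[ps qs rs]; move: ce.
      rewrite -(triple_eq Hs ps qs rs pq pr qr) glue_cnt // cs subsetUr //.
    have h1 := tri _ _ _ ab ad bd (sub3_4 (or_introl erefl)) c1.
    have h2 := tri _ _ _ ab ax bx (sub3_4 (or_intror (or_introl erefl))) c2.
    rewrite !subsetE_card !ind4 // Hs.
    move: hsum h1 h2 csg; move: (a \in sg) (b \in sg) (c \in sg) (d \in sg) (x \in sg) => ia ib ic id ix.
    clear -ia ib ic id ix; by case: ia; case: ib; case: ic; case: id; case: ix => /=; lia.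
  + have vQ := Hv _ QB.
    have vc : v != c by apply: contraNneq (cnew _ (setU11 _ _)) => <-; rewrite setU11.
    have va : v != a by apply: contraNneq vQ => ->; rewrite !inE eqxx.
    have vb : v != b by apply: contraNneq vQ => ->; rewrite !inE eqxx ?orbT.
    have vd : v != d by apply: contraNneq vQ => ->; rewrite !inE eqxx ?orbT.
    have vx : v != x by apply: contraNneq vQ => ->; rewrite !inE eqxx ?orbT.
    move=> t; rewrite !in_setU1 !in_setD1 => /or3P[/eqP->|/eqP->|/andP[_ tB]]; last exact: Hv.
    * by rewrite !inE; neqs.
    * by rewrite !inE; neqs.
Qed.

End SL2.


Section FL.
Variable W : finType.
Implicit Types (B : {set {set W}}) (s t X : {set W}).

Lemma sub_trip (p q r : W) (X : {set W}) : p \in X -> q \in X -> r \in X -> [set p; q; r] \subset X.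
Proof. by move=> pX qX rX; apply/subsetP=> e; rewrite !inE -!orbA => /or3P[]/eqP->. Qed.

Lemma FL B : stacked_ball B -> forall a b c d x : W, uniq [:: a; b; c; d; x] ->
  [set a; b; c; x] \in B -> [set a; b; d; x] \in B ->
  cnt B [set a; b; c] = 1 -> cnt B [set a; b; d] = 1 -> nocd B c d ->
  stacked_ball (flipB B a b c d x).
Proof.
move=> HB0; have Hc2 := SB_cnt2 HB0; move: Hc2.
elim: HB0 => {B} [t Ht | B sg v HB IH Hs [t0 t0B st0] cs Hv] Hc2 a b c d x U PB QB c1 c2 ncd;
  have [ab [ac [ad [ax [bc [bd [bx [cd [cx dx]]]]]]]]] := dist5 U.
  move: PB QB; rewrite !in_set1 => /eqP <- /eqP /setP /(_ c).
  by rewrite !inE !eqxx /=; neqs.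
have vsg := glue_vs t0B st0 Hv.
have {}cs : cnt B sg = 1 := cs.
have NB := glue_NB sg Hv.
have Pc : c \in [set a; b; c; x] by rewrite !inE eqxx ?orbT.
have Qc : c \notin [set a; b; d; x] by rewrite !inE; neqs.
have Qd : d \in [set a; b; d; x] by rewrite !inE eqxx ?orbT.
have Pd : d \notin [set a; b; c; x] by rewrite !inE; neqs.
have inP p : p \in [set a; b; c; x] -> p != c -> p \in [set a; b; d; x].
  by rewrite !inE -!orbA => /or4P[]/eqP->; rewrite ?eqxx ?orbT //; neqs.
have inQ p : p \in [set a; b; d; x] -> p != d -> p \in [set a; b; c; x].
  by rewrite !inE -!orbA => /or4P[]/eqP->; rewrite ?eqxx ?orbT //; neqs.
have cntB s X : s \subset X -> X \in B -> cnt ((v |: sg) |: B) s = 1 -> cnt B s = 1 /\ ~~ (s \subset v |: sg).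
  move=> sX XB; rewrite glue_cnt // => e.
  have : 0 < cnt B s by rewrite cnt_gt0; apply/existsP; exists X; rewrite XB sX.
  by move: e; case: (s \subset _); case: (cnt B s) => [|[|n]] //= [].
move: PB QB; rewrite !in_setU1 => /orP[/eqP PN|PB] /orP[/eqP QN|QB].
- by move: Qc; rewrite QN -PN Pc.
-
  have vP : v \in [set a; b; c; x] by rewrite PN setU11.
  have vQ := Hv _ QB.
  have vc : v = c.
    apply/eqP; apply: contraNT vQ => vc; exact: inP.
  have E : sg = [set a; b; x].
    apply: triple_eq => //.
    + have : a \in v |: sg by rewrite -PN !inE eqxx.
      by rewrite !inE vc (negbTE ac).
    + have : b \in v |: sg by rewrite -PN !inE eqxx ?orbT.
      by rewrite !inE vc (negbTE bc).
    + have : x \in v |: sg by rewrite -PN !inE eqxx ?orbT.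
      by rewrite !inE vc (eq_sym x) (negbTE cx).
  rewrite /flipB PN setU1K //.
  apply: SL => //.
  + by move=> t tB; rewrite -vc; apply: Hv.
  + have [] := cntB _ _ (sub_trip _ _ _ : [set a; b; d] \subset [set a; b; d; x]) QB c2 => //;
      by rewrite !inE eqxx ?orbT.
  + by rewrite -E.
-
  have vQ : v \in [set a; b; d; x] by rewrite QN setU11.
  have vP := Hv _ PB.
  have vd : v = d.
    apply/eqP; apply: contraNT vP => vd; exact: inQ.
  have E : sg = [set a; b; x].
    apply: triple_eq => //.
    + have : a \in v |: sg by rewrite -QN !inE eqxx.
      by rewrite !inE vd (negbTE ad).
    + have : b \in v |: sg by rewrite -QN !inE eqxx ?orbT.
      by rewrite !inE vd (negbTE bd).
    + have : x \in v |: sg by rewrite -QN !inE eqxx ?orbT.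
      by rewrite !inE vd (eq_sym x) (negbTE dx).
  have U' : uniq [:: a; b; d; c; x].
    by rewrite /= !inE; neqs.
  have -> : flipB (v |: sg |: B) a b c d x =
      [set a; d; c; x] |: ([set b; d; c; x] |: (B :\ [set a; b; c; x])).
    have e1 : [set a; d; c; x] = [set a; c; d; x].
      by apply/setP=> e; rewrite !inE; case: (e == a); case: (e == c); case: (e == d); case: (e == x).
    have e2 : [set b; d; c; x] = [set b; c; d; x].
      by apply/setP=> e; rewrite !inE; case: (e == b); case: (e == c); case: (e == d); case: (e == x).
    rewrite /flipB e1 e2 QN; congr (_ |: (_ |: _)).
    apply/setP=> T; rewrite !inE; case: (T =P v |: sg) => [->|_] /=; first by rewrite (negbTE NB) andbF.
    by [].
  apply: SL => //.
  + by move=> t tB; rewrite -vd; apply: Hv.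
  + have [] := cntB _ _ (sub_trip _ _ _ : [set a; b; c] \subset [set a; b; c; x]) PB c1 => //;
      by rewrite !inE eqxx ?orbT.
  + by rewrite -E.
-
  have sP3 : [set a; b; c] \subset [set a; b; c; x] by apply: sub_trip; rewrite !inE eqxx ?orbT.
  have sQ3 : [set a; b; d] \subset [set a; b; d; x] by apply: sub_trip; rewrite !inE eqxx ?orbT.
  have [c1' n1] := cntB _ _ sP3 PB c1.
  have [c2' n2] := cntB _ _ sQ3 QB c2.
  have ncdB : nocd B c d by move=> t tB; apply: ncd; rewrite in_setU1 tB orbT.
  have Hc2' : forall s, #|s| = 3 -> cnt B s <= 2 := SB_cnt2 HB.
  have IH' := IH Hc2' a b c d x U PB QB c1' c2' ncdB.
  have NP : v |: sg != [set a; b; c; x] by apply: contraNneq (Hv _ PB) => <-; rewrite setU11.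
  have NQ : v |: sg != [set a; b; d; x] by apply: contraNneq (Hv _ QB) => <-; rewrite setU11.
  have -> : flipB (v |: sg |: B) a b c d x = (v |: sg) |: flipB B a b c d x.
    apply/setP=> T; rewrite /flipB !inE; case: (T =P v |: sg) => [->|_] /=; first by rewrite NP NQ !orbT.
    by [].
  apply: glue' => //.
  + have m1 : sg != [set a; b; c] by apply: contraNneq n1 => ->; apply: subsetUr.
    have m2 : sg != [set a; b; d] by apply: contraNneq n2 => ->; apply: subsetUr.
    have cdsg : ~~ ((c \in sg) && (d \in sg)).
      apply/negP=> /andP[cs' ds']; move: (ncdB _ t0B).
      by rewrite (subsetP st0 c cs') (subsetP st0 d ds').
    have m3 : sg != [set a; c; d].
      by apply: contraNneq cdsg => ->; rewrite !inE !eqxx ?orbT.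
    have m4 : sg != [set b; c; d].
      by apply: contraNneq cdsg => ->; rewrite !inE !eqxx ?orbT.
    apply/eqP; rewrite (flip_bd U PB QB ncdB (Hc2' _ (card3 ab ax bx)) Hs m1 m2 m3 m4).
    by rewrite cs.
  + have vc : v != c by apply: contraNneq (Hv _ PB) => ->.
    have vd : v != d by apply: contraNneq (Hv _ QB) => ->.
    have va : v != a by apply: contraNneq (Hv _ PB) => ->; rewrite !inE eqxx.
    have vb : v != b by apply: contraNneq (Hv _ PB) => ->; rewrite !inE eqxx ?orbT.
    have vx : v != x by apply: contraNneq (Hv _ PB) => ->; rewrite !inE eqxx ?orbT.
    move=> t; rewrite /flipB !in_setU1 !in_setD1 => /or3P[/eqP->|/eqP->|/and3P[_ _ tB]]; last exact: Hv.
    * by rewrite !inE; neqs.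
    * by rewrite !inE; neqs.
Qed.

End FL.


Section FB.
Variable W : finType.
Implicit Types (B : {set {set W}}) (s t X : {set W}).

Lemma flip_boundary B (a b c d x : W) : uniq [:: a; b; c; d; x] ->
  [set a; b; c; x] \in B -> [set a; b; d; x] \in B -> nocd B c d ->
  cnt B [set a; b; c] = 1 -> cnt B [set a; b; d] = 1 -> cnt B [set a; b; x] <= 2 ->
  boundary (flipB B a b c d x) =
  [set [set a; c; d]; [set b; c; d]] :|: (boundary B :\ [set a; b; c] :\ [set a; b; d]).
Proof.
move=> U PB QB ncd c1 c2 c3; have [ab [ac [ad [ax [bc [bd [bx [cd [cx dx]]]]]]]]] := dist5 U.
have FC := flip_cnt U PB QB ncd.
have cd0 s : c \in s -> d \in s -> cnt B s = 0.
  move=> cs ds; apply: cntE0 => t tB; apply: contra (ncd t tB).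
  by move=> /subsetP st; rewrite (st c cs) (st d ds).
apply/setP=> s; rewrite inbd !inE.
case: (s =P [set a; c; d]) => [E|/eqP n1].
  subst s; rewrite card3 // eqxx FC cd0 ?inE ?eqxx ?orbT //.
  by rewrite !subsetE_card !ind4 ?card3 // !inE !eqxx; neqs.
case: (s =P [set b; c; d]) => [E|/eqP n2].
  subst s; rewrite card3 // eqxx FC cd0 ?inE ?eqxx ?orbT //.
  by rewrite !subsetE_card !ind4 ?card3 // !inE !eqxx; neqs; rewrite orbT.
case: (s =P [set a; b; c]) => [E|/eqP n3].
  subst s; rewrite card3 // eqxx FC c1.
  by rewrite !subsetE_card !ind4 ?card3 // !inE !eqxx; neqs; rewrite /= ?eqxx ?andbF ?orbF.
case: (s =P [set a; b; d]) => [E|/eqP n4].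
  subst s; rewrite card3 // eqxx FC c2.
  by rewrite !subsetE_card !ind4 ?card3 // !inE !eqxx; neqs; rewrite /= ?eqxx ?andbF ?orbF.
rewrite /=.
case s3: (#|s| == 3) => //=.
by rewrite (flip_bd U PB QB ncd c3 (eqP s3) n3 n4 n1 n2).
Qed.

End FB.

Section Transfer.
Variables (W V : finType) (f : W -> V).
Hypothesis injf : injective f.

Let g (t : {set W}) : {set V} := f @: t.
Lemma inbd' (U : finType) (B : {set {set U}}) s : (s \in boundary B) = (#|s| == 3) && (cnt B s == 1).
Proof. by rewrite inE. Qed.

Lemma g_inj : injective g.
Proof. exact: imset_inj. Qed.

Lemma img_sub (s t : {set W}) : (g s \subset g t) = (s \subset t).
Proof.
apply/idP/idP; last exact: imsetS.
move=> /subsetP H; apply/subsetP=> z zs.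
by have := H (f z); rewrite /g !mem_imset // => /(_ zs).
Qed.

Lemma img_cnt (B : {set {set W}}) (s : {set W}) : cnt (g @: B) (g s) = cnt B s.
Proof.
rewrite /cnt -(card_imset _ g_inj).
have -> // : [set T in g @: B | g s \subset T] = g @: [set t in B | s \subset t].
apply/setP=> T; rewrite inE.
apply/andP/imsetP=> [[/imsetP[t tB ->] st]|[t]]; last first.
  by rewrite inE => /andP[tB st] ->; split; [apply: imset_f | rewrite img_sub].
by exists t => //; rewrite inE tB -img_sub.
Qed.

Lemma img_ball (B : {set {set W}}) : stacked_ball B -> stacked_ball (g @: B).
Proof.
elim=> {B} [t Ht | B sg v HB IH Hs [t0 t0B st0] cs Hv].
  by rewrite imset_set1; apply: sb_base; rewrite card_imset.
rewrite imsetU1 /g imsetU1 -/g; apply: sb_glue => //.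
- by rewrite card_imset.
- by exists (g t0); [apply: imset_f | rewrite img_sub].
- by have := img_cnt B sg; rewrite /cnt cs; apply.
- move=> T /imsetP[t tB ->]; rewrite /g mem_imset //; exact: Hv.
Qed.

Lemma img_bd (B : {set {set W}}) : boundary (g @: B) = g @: boundary B.
Proof.
apply/setP=> s'; apply/idP/imsetP=> [|[s sb ->]].
  rewrite inbd' => /andP[/eqP c3 /eqP c1].
  have : 0 < cnt (g @: B) s' by rewrite c1.
  rewrite cnt_gt0 => /existsP[T /andP[/imsetP[t tB ->] st]].
  have E : s' = g (f @^-1: s').
    apply/setP=> y; apply/idP/imsetP=> [ys|[z]]; last by rewrite inE => ? ->.
    have := subsetP st y ys; case/imsetP=> z _ yz; exists z => //; by rewrite inE -yz.
  move: (f @^-1: s') E => s0 E; subst s'; exists s0 => //.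
  by move: c3 c1; rewrite inbd' /g card_imset // -/(g s0) img_cnt => -> ->.
move: sb; rewrite !inbd' /g card_imset // -/(g s) img_cnt //.
Qed.

End Transfer.

Lemma sphere_ball (V : finType) (S : {set {set V}}) : stacked_sphere S ->
  exists B : {set {set V}}, stacked_ball B /\ S = boundary B.
Proof.
case=> W [B [f [injf HB ->]]]; exists ((fun t : {set W} => f @: t) @: B); split.
  exact: img_ball.
by rewrite img_bd.
Qed.

Lemma ball_sphere (V : finType) (B : {set {set V}}) : stacked_ball B -> stacked_sphere (boundary B).
Proof.
move=> HB; exists V, B, id; split => //.
apply/setP=> t; apply/idP/imsetP => [tb|[u ub ->]].
  by exists t => //; rewrite imset_id.
by rewrite imset_id.
Qed.


Section Main.
Variable V : finType.
Implicit Types (B : {set {set V}}) (s t X : {set V}).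

Lemma cov_sym B (u w : V) : cov B u w = cov B w u.
Proof. by apply/existsP/existsP=> [[t /and3P[? ? ?]]|[t /and3P[? ? ?]]]; exists t; apply/and3P. Qed.

Lemma bd_cov B s (u w : V) : s \in boundary B -> u \in s -> w \in s -> cov B u w.
Proof.
move=> sb us ws; case: (bd_sub sb) => t tB st; apply/existsP; exists t.
by rewrite tB (subsetP st u us) (subsetP st w ws).
Qed.

Lemma tet_cov B t (u w : V) : t \in B -> u \in t -> w \in t -> cov B u w.
Proof. by move=> tB ut wt; apply/existsP; exists t; rewrite tB ut wt. Qed.

Lemma is_edgeE B (u w : V) : stacked_ball B -> is_edge (boundary B) u w = (u != w) && cov B u w.
Proof.
move=> HB; rewrite /is_edge; case: (u =P w) => //= /eqP uw; apply/existsP/idP.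
  by case=> s /and3P[sb us ws]; apply: bd_cov sb us ws.
by case/(SB_edge HB uw) => s sb /andP[us ws]; exists s; rewrite sb us ws.
Qed.

Lemma get4 (A : {set V}) (a b c : V) : #|A| = 4 -> a \in A -> b \in A -> c \in A ->
  a != b -> a != c -> b != c ->
  exists x, [/\ x != a, x != b, x != c & A = [set a; b; c; x]].
Proof.
move=> A4 aA bA cA ab ac bc.
have : 0 < #|A :\ a :\ b :\ c|.
  move: A4; rewrite (cardsD1 a A) (cardsD1 b (A :\ a)) (cardsD1 c (A :\ a :\ b)) !inE aA bA cA.
  neqs; move=> /= e; rewrite lt0n; apply/eqP=> e0; by move: e; rewrite e0.
rewrite card_gt0 => /set0Pn[x]; rewrite !inE => /and4P[xc xb xa xA].
exists x; split => //; apply/esym/sub_eq_card; last by rewrite A4 card4 // eq_sym.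
by apply/subsetP=> e; rewrite !inE -!orbA => /or4P[]/eqP->.
Qed.

Lemma Sbar_ball B (A : {set V}) : stacked_ball B -> A \in Sbar (boundary B) -> A \in B.
Proof.
move=> HB; rewrite inE => /andP[/eqP A4 /forallP H].
apply: (SB_clique HB A4) => p q pA qA.
have Hpq p' q' : p' \in A -> q' \in A -> p' != q' -> cov B p' q'.
  move=> p'A q'A ne; move: (H p'); rewrite p'A /= => /forallP/(_ q'); rewrite q'A ne /=.
  by rewrite is_edgeE // => /andP[].
case: (p =P q) => [<-|/eqP ne]; last exact: Hpq.
have := @pick_other _ A p p; rewrite A4 => /(_ isT) [z [zA zp _]].
have pz : p != z by rewrite eq_sym.
case/existsP: (Hpq _ _ pA zA pz) => t /and3P[tB ptt _].
exact: (tet_cov tB ptt ptt).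
Qed.

End Main.


Unset Implicit Arguments.
Theorem theorem4p1 (V : finType) (S : {set {set V}}) (a b c d : V) :
  stacked_sphere S ->
  a != b -> a != c -> a != d -> b != c -> b != d -> c != d ->
  [set a; b; c] \in S -> [set a; b; d] \in S ->
  (* (a) *)
  (forall A B : {set V}, A \in Sbar S -> B \in Sbar S ->
     [set a; b; c] \subset A -> [set a; b; d] \subset B ->
     dual_adj A B ->
     ~~ is_edge S c d /\ stacked_sphere (edge_flip S a b c d))
  /\
  (* (b) *)
  (~~ is_edge S c d -> stacked_sphere (edge_flip S a b c d) ->
   forall A B : {set V}, A \in Sbar S -> B \in Sbar S ->
     [set a; b; c] \subset A -> [set a; b; d] \subset B ->
     dual_adj A B).
Proof.
move=> HS ab ac ad bc bd cd Sabc Sabd.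
have [Bl [HB SE]] := sphere_ball HS; subst S.
have c1 : cnt Bl [set a; b; c] = 1 by move: Sabc; rewrite inbd => /andP[_ /eqP].
have c2 : cnt Bl [set a; b; d] = 1 by move: Sabd; rewrite inbd => /andP[_ /eqP].
have Hc := SB_card HB.
have shape (A Bt : {set V}) : A \in Sbar (boundary Bl) -> Bt \in Sbar (boundary Bl) ->
    [set a; b; c] \subset A -> [set a; b; d] \subset Bt ->
    exists x y, [/\ A \in Bl, Bt \in Bl, A = [set a; b; c; x], Bt = [set a; b; d; y] &
      [/\ x != a, x != b, x != c & (y != a /\ y != b /\ y != d)]].
  move=> HA HBt sA sB; have AB := Sbar_ball HB HA; have BB := Sbar_ball HB HBt.
  have aA : a \in A by apply: (subsetP sA); rewrite !inE eqxx.
  have bA : b \in A by apply: (subsetP sA); rewrite !inE eqxx ?orbT.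
  have cA : c \in A by apply: (subsetP sA); rewrite !inE eqxx ?orbT.
  have aB : a \in Bt by apply: (subsetP sB); rewrite !inE eqxx.
  have bB : b \in Bt by apply: (subsetP sB); rewrite !inE eqxx ?orbT.
  have dB : d \in Bt by apply: (subsetP sB); rewrite !inE eqxx ?orbT.
  have [x [xa xb xc EA]] := get4 (Hc _ AB) aA bA cA ab ac bc.
  have [y [ya yb yd EB]] := get4 (Hc _ BB) aB bB dB ab ad bd.
  by exists x, y.
split.
-
  move=> A Bt HA HBt sA sB /andP[nAB /eqP I3].
  have [x [y [AB BB EA EB [xa xb xc [ya [yb yd]]]]]] := shape A Bt HA HBt sA sB.
  have dA : d \notin A.
    apply/negP=> dA; move: nAB; rewrite (cnt1_uniq c2 AB BB) ?eqxx //.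
    by apply: sub_trip => //; apply: (subsetP sA); rewrite !inE eqxx ?orbT.
  have cB : c \notin Bt.
    apply/negP=> cB; move: nAB; rewrite (cnt1_uniq c1 AB BB) ?eqxx //.
    by apply: sub_trip => //; apply: (subsetP sB); rewrite !inE eqxx ?orbT.
  have xd : x != d by apply: contraNneq dA => <-; rewrite EA !inE eqxx ?orbT.
  have ax' : a != x by rewrite eq_sym.
  have bx' : b != x by rewrite eq_sym.
  have cx' : c != x by rewrite eq_sym.
  have xy : x = y.
    move: I3; rewrite setIC EA ind4 //.
    rewrite (subsetP sB a) ?(subsetP sB b) ?inE ?eqxx ?orbT // (negbTE cB) /=.
    case xB: (x \in Bt) => // _; move: xB; rewrite EB !inE; neqs; by move=> /= /eqP.
  subst y.
  have U : uniq [:: a; b; c; d; x] by rewrite /= !inE; neqs.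
  have PQ3 : #|A :&: Bt| = 3 := I3.
  have ncd : nocd Bl c d.
    move=> t tB; apply: (SB_nocd HB AB BB) => //.
    + by rewrite EA !inE eqxx ?orbT.
    + by rewrite EB !inE eqxx ?orbT.
  rewrite EA EB in AB BB.
  split.
  + rewrite is_edgeE // cd /=; apply/negP=> /existsP[t /and3P[tB ct dt]].
    by move: (ncd t tB); rewrite ct dt.
  + have F := FL HB U AB BB c1 c2 ncd.
    rewrite /edge_flip -(flip_boundary U AB BB ncd c1 c2) ?(SB_cnt2 HB) ?card3 //.
    exact: ball_sphere.
-
  move=> ncd' HT A Bt HA HBt sA sB.
  have [BT [HBT TE]] := sphere_ball HT.
  have [x [y [AB BB EA EB [xa xb xc [ya [yb yd]]]]]] := shape A Bt HA HBt sA sB.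
  have covcd : ~~ cov Bl c d by move: ncd'; rewrite is_edgeE // cd.
  have dA : d \notin A.
    apply: contra covcd => dA; apply: (tet_cov AB) => //; rewrite EA !inE eqxx ?orbT //.
  have cB : c \notin Bt.
    apply: contra covcd => cB; apply: (tet_cov BB) => //; rewrite EB !inE eqxx ?orbT //.
  have xd : x != d by apply: contraNneq dA => <-; rewrite EA !inE eqxx ?orbT.
  have yc : y != c by apply: contraNneq cB => <-; rewrite EB !inE eqxx ?orbT.
  have nAB : A != Bt by apply: contraNneq cB => <-; rewrite EA !inE eqxx ?orbT.
  have ax' : a != x by rewrite eq_sym.
  have bx' : b != x by rewrite eq_sym.
  have cx' : c != x by rewrite eq_sym.
  have aB : a \in Bt by apply: (subsetP sB); rewrite !inE eqxx.
  have bB : b \in Bt by apply: (subsetP sB); rewrite !inE eqxx ?orbT.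
  suff xy : x = y.
    subst y; rewrite /dual_adj nAB /= EA setIC ind4 // aB bB (negbTE cB).
    by rewrite EB !inE eqxx ?orbT.
  apply/eqP; apply/negPn/negP => xy.
  set T := edge_flip (boundary Bl) a b c d in TE.
  have covA p q : p \in [set a; b; c; x] -> q \in [set a; b; c; x] -> cov Bl p q.
    by rewrite -EA; apply: tet_cov.
  have covB p q : p \in [set a; b; d; y] -> q \in [set a; b; d; y] -> cov Bl p q.
    by rewrite -EB; apply: tet_cov.
  have toT z w : z != w -> z \notin [set a; b; c] -> z \notin [set a; b; d] -> cov Bl z w -> cov BT z w.
    move=> zw zc zd cz; have [s sb /andP[zs ws]] := SB_edge HB zw cz.
    have sT : s \in T.
      rewrite /T /edge_flip in_setU !in_setD1 sb andbT; apply/orP; right; apply/andP; split.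
      * by apply: contraNneq zd => <-.
      * by apply: contraNneq zc => <-.
    by rewrite TE in sT; apply: bd_cov sT zs ws.
  have toS z w : z != w -> z \notin [set a; c; d] -> z \notin [set b; c; d] -> cov BT z w -> cov Bl z w.
    move=> zw zc zd cz; have [s sb /andP[zs ws]] := SB_edge HBT zw cz.
    move: sb; rewrite -TE /T /edge_flip in_setU !in_setD1 in_set2 -orbA => /or3P[/eqP E|/eqP E|/and3P[_ _ sb]].
    * by move: zc; rewrite -E zs.
    * by move: zd; rewrite -E zs.
    * exact: bd_cov sb zs ws.
  have xn1 : x \notin [set a; b; c] by rewrite !inE; neqs.
  have xn2 : x \notin [set a; b; d] by rewrite !inE; neqs.
  have yn1 : y \notin [set a; b; c] by rewrite !inE; neqs.
  have yn2 : y \notin [set a; b; d] by rewrite !inE; neqs.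
  have xn3 : x \notin [set a; c; d] by rewrite !inE; neqs.
  have xn4 : x \notin [set b; c; d] by rewrite !inE; neqs.
  have yn3 : y \notin [set a; c; d] by rewrite !inE; neqs.
  have yn4 : y \notin [set b; c; d] by rewrite !inE; neqs.
  have cBl3 : nocd Bl c d by move=> t tB; apply: contra covcd => /andP[]; apply: tet_cov tB.
  have nxd : ~~ cov Bl x d.
    apply/negP=> cxd.
    have K4 : #|[set a; b; d; x]| = 4 by rewrite card4 // eq_sym.
    have KB : [set a; b; d; x] \in Bl.
      apply: (SB_clique HB K4) => p q.
      rewrite !inE -!orbA => /or4P[]/eqP-> /or4P[]/eqP->;
        first [ by apply: covA; rewrite !inE ?eqxx ?orbT
              | by apply: covB; rewrite !inE ?eqxx ?orbT
              | exact: cxd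
              | by rewrite cov_sym ].
    have : [set a; b; d; x] = Bt.
      apply: (cnt1_uniq c2 KB BB); apply: sub_trip; rewrite ?EB !inE eqxx ?orbT //.
    move=> E; move: xy; have : x \in Bt by rewrite -E !inE eqxx ?orbT.
    rewrite EB !inE; neqs; by move=> /= /eqP->; rewrite eqxx.
  have nyc : ~~ cov Bl y c.
    apply/negP=> cyc.
    have K4 : #|[set a; b; c; y]| = 4 by rewrite card4 // eq_sym.
    have KB : [set a; b; c; y] \in Bl.
      apply: (SB_clique HB K4) => p q.
      rewrite !inE -!orbA => /or4P[]/eqP-> /or4P[]/eqP->;
        first [ by apply: covA; rewrite !inE ?eqxx ?orbT
              | by apply: covB; rewrite !inE ?eqxx ?orbT
              | exact: cyc
              | by rewrite cov_sym ].
    have : [set a; b; c; y] = A.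
      apply: (cnt1_uniq c1 KB AB); apply: sub_trip; rewrite ?EA !inE eqxx ?orbT //.
    move=> E; move: xy; have : y \in A by rewrite -E !inE eqxx ?orbT.
    rewrite EA !inE; neqs; by move=> /= /eqP->; rewrite eqxx.
  have acdT : [set a; c; d] \in boundary BT by rewrite -TE /T /edge_flip !inE eqxx.
  have bcdT : [set b; c; d] \in boundary BT by rewrite -TE /T /edge_flip !inE eqxx ?orbT.
  case: (boolP (cov Bl x y)) => cxy.
  - apply: (SB_C4 HBT (p1 := c) (p2 := x) (p3 := y) (p4 := d)).
    + by rewrite cov_sym; apply: toT => //; apply: covA; rewrite !inE eqxx ?orbT.
    + exact: toT.
    + by apply: toT => //; apply: covB; rewrite !inE eqxx ?orbT.
    + by apply: (bd_cov acdT); rewrite !inE eqxx ?orbT.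
    + apply/negP; rewrite cov_sym => /toS; rewrite (negbTE nyc) => /(_ yc yn3 yn4) //.
    + apply/negP => /toS; rewrite (negbTE nxd) => /(_ xd xn3 xn4) //.
  - apply: (SB_C4 HBT (p1 := a) (p2 := x) (p3 := b) (p4 := y)).
    + by rewrite cov_sym; apply: toT => //; apply: covA; rewrite !inE eqxx ?orbT.
    + by apply: toT => //; apply: covA; rewrite !inE eqxx ?orbT.
    + by rewrite cov_sym; apply: toT => //; apply: covB; rewrite !inE eqxx ?orbT.
    + by apply: toT => //; apply: covB; rewrite !inE eqxx ?orbT.
    + apply/negP => /(SB_edge HBT ab) [s sb /andP[as' bs]].
      move: sb; rewrite -TE /T /edge_flip in_setU !in_setD1 in_set2 -orbA => /or3P[/eqP E|/eqP E|/and3P[n1 n2 sb]].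
      * by move: bs; rewrite E !inE; neqs.
      * by move: as'; rewrite E !inE; neqs.
      * have h1 : (a \in [set a; b; c]) && (b \in [set a; b; c]) by rewrite !inE !eqxx ?orbT.
        have h2 : (a \in [set a; b; d]) && (b \in [set a; b; d]) by rewrite !inE !eqxx ?orbT.
        have h3 : (a \in s) && (b \in s) by rewrite as' bs.
        case: (SB_link HB ab Sabc Sabd sb h1 h2 h3) => E.
        -- by move: E => /setP/(_ c); rewrite !inE !eqxx ?orbT; neqs.
        -- by move: n2; rewrite E eqxx.
        -- by move: n1; rewrite E eqxx.
    + apply/negP => /toS; rewrite (negbTE cxy) => /(_ xy xn3 xn4) //.
Qed.
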